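(* For every integer $n\ge 1$, $\mathfrak D^1_{2n}(231,4213)=\{(2,1,4,3,\dots,2n,2n-1)\}$, i.e. the only Dumont permutation of the first kind of length $2n$ avoiding both $231$ and $4213$ is the permutation $\pi$ with $\pi(2i-1)=2i$, $\pi(2i)=2i-1$ for $i=1,\dots,n$.
   Context: A Dumont permutation of the first kind of length $2n$ is a permutation $\pi\in\mathfrak S_{2n}$ such that for every $i=1,\dots,2n$: if $\pi(i)$ is even then $i<2n$ and $\pi(i)>\pi(i+1)$; if $\pi(i)$ is odd then $i=2n$ or $\pi(i)<\pi(i+1)$. $\mathfrak D^1_{2n}$ denotes the set of these. A permutation $\sigma$ contains a pattern $\tau\in\mathfrak S_k$ if some subsequence $(\sigma(i_1),\dots,\sigma(i_k))$, $i_1<\dots<i_k$, is order-isomorphic to $\tau$; otherwise $\sigma$ avoids $\tau$. $\mathfrak D^1_{2n}(T)$ denotes the set of permutations in $\mathfrak D^1_{2n}$ avoiding every pattern in $T$. Permutations are written in one-line notation. *)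

(* Defs.v *)
From mathcomp Require Import all_boot all_fingroup.
Set Implicit Arguments. Unset Strict Implicit. Unset Printing Implicit Defensive.

(* Permutations of {1,...,m} are represented as s : 'S_m acting on 'I_m = {0,...,m-1};
   position i (1-based) corresponds to the ordinal i-1 and the value pi(i) = (s (i-1)) + 1.
   Hence "pi(i) is even" iff the 0-based value (s _) is odd. *)

Definition dumont1 (m : nat) (s : 'S_m) : Prop :=
  forall (i : 'I_m),
    if odd (s i) (* pi(i) even *)
    then exists h : i.+1 < m, s (Ordinal h) < s i
    else forall h : i.+1 < m, s i < s (Ordinal h).

Definition contains_pat (m : nat) (s : 'S_m) (tau : seq nat) : Prop :=
  exists f : 'I_(size tau) -> 'I_m,
    (forall a b : 'I_(size tau), a < b -> f a < f b) /\
    (forall a b : 'I_(size tau),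
        (s (f a) < s (f b)) = (nth 0 tau a < nth 0 tau b)).

Definition avoids_pat (m : nat) (s : 'S_m) (tau : seq nat) : Prop :=
  ~ contains_pat s tau.

(* the patterns 231 and 4213, written 0-based *)
Definition pat231 : seq nat := [:: 1; 2; 0].
Definition pat4213 : seq nat := [:: 3; 1; 0; 2].

(* Main.v *)
Require Import Defs.
From mathcomp Require Import all_boot all_fingroup zify.
Set Warnings "-notation-overridden".

Definition partner (i : nat) := if odd i then i.-1 else i.+1.

Lemma partner_lt j v : v < j.*2 -> partner v < j.*2.
Proof.
rewrite /partner; have := odd_double_half v; case: (odd v) => /= h; lia.
Qed.

Arguments partner_lt {j v}.

Lemma partnerK v : partner (partner v) = v.
Proof.
rewrite /partner; have := odd_double_half v; case: (odd v) => /= h.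
  have -> : odd v.-1 = false.
    by rewrite -h /= odd_double.
  lia.
by rewrite -h /= odd_double.
Qed.

Lemma inv_gap m (s : 'S_m) (x z : 'I_m) :
  (forall i : 'I_m, nat_of_ord (s i) = partner i) -> x < z -> s z < s x -> z = x.+1 :> nat.
Proof.
move=> H; rewrite !H /partner.
have := odd_double_half x; have := odd_double_half z.
case: (odd x); case: (odd z) => /= h1 h2; lia.
Qed.
Lemma mk231 m (s : 'S_m) (x y z : 'I_m) : x < y -> y < z -> s z < s x -> s x < s y ->
  contains_pat s pat231.
Proof.
move=> h1 h2 h3 h4.
exists (fun a : 'I_3 => nth x [:: x; y; z] a); split.
  by move=> [[|[|[|k]]] Ha] [[|[|[|l]]] Hb] //= _; lia.
by move=> [[|[|[|k]]] Ha] [[|[|[|l]]] Hb] //=; apply/idP/idP; lia.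
Qed.

Lemma mk4213 m (s : 'S_m) (w x y z : 'I_m) : w < x -> x < y -> y < z ->
  s y < s x -> s x < s z -> s z < s w -> contains_pat s pat4213.
Proof.
move=> h1 h2 h3 h4 h5 h6.
exists (fun a : 'I_4 => nth w [:: w; x; y; z] a); split.
  by move=> [[|[|[|[|k]]]] Ha] [[|[|[|[|l]]]] Hb] //= _; lia.
by move=> [[|[|[|[|k]]]] Ha] [[|[|[|[|l]]]] Hb] //=; apply/idP/idP; lia.
Qed.

Lemma step m (s : 'S_m) (Hd : dumont1 s) (H231 : avoids_pat s pat231)
  (H4213 : avoids_pat s pat4213) j (hj : j.*2.+1 < m)
  (IH : forall i : 'I_m, i < j.*2 -> nat_of_ord (s i) = partner i) :
  forall i : 'I_m, i < j.*2.+2 -> nat_of_ord (s i) = partner i.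
Proof.
have low : forall x : 'I_m, j.*2 <= x -> j.*2 <= s x.
  move=> x hx; rewrite leqNgt; apply/negP => hsx.
  have hy : partner (s x) < m by have := partner_lt hsx; lia.
  have e : s (Ordinal hy) = s x.
    by apply: ord_inj => /=; rewrite IH /= ?partnerK //; exact: partner_lt.
  move/perm_inj: e => /(congr1 (@nat_of_ord m)) /= e'.
  have := partner_lt hsx; lia.
have posge : forall x : 'I_m, j.*2 <= s x -> j.*2 <= x.
  move=> x hx; rewrite leqNgt; apply/negP => h; move: (IH x h) (partner_lt h); lia.
pose v1 : 'I_m := Ordinal hj.
pose v0 : 'I_m := Ordinal (ltnW hj).
pose q := (s^-1)%g v1; pose p := (s^-1)%g v0.
have sq : nat_of_ord (s q) = j.*2.+1 by rewrite /q permKV.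
have sp : nat_of_ord (s p) = j.*2 by rewrite /p permKV.
have qge : j.*2 <= q by apply: posge; rewrite sq.
have pq : nat_of_ord p = q.+1.
  have := Hd q; rewrite sq /= odd_double /= => -[h hlt].
  have e : s (Ordinal h) = s p.
    apply: ord_inj; rewrite sp /=.
    have := low (Ordinal h) ltac:(rewrite /=; lia). lia.
  by move/perm_inj: e => <-.
case: (ltnP j.*2 q) => hq; last first.
  have hq' : nat_of_ord q = j.*2 by lia.
  move=> i hi; case: (ltnP i j.*2) => [/IH //|hi2].
  have [e|e] : nat_of_ord i = q \/ nat_of_ord i = p by lia.
    have -> : i = q by apply: ord_inj.
    by rewrite sq /partner hq' odd_double.
  have -> : i = p by apply: ord_inj.
  by rewrite sp /partner pq hq' /= odd_double.
have hq1 : q.-1 < m by have := ltn_ord q; lia.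
have cge : j.*2 <= s (Ordinal hq1) by apply: low => /=; lia.
have cne0 : nat_of_ord (s (Ordinal hq1)) != j.*2.
  apply/eqP => e; have : s (Ordinal hq1) = s p by apply: ord_inj; rewrite sp.
  move/perm_inj/(congr1 (@nat_of_ord m)) => /=; lia.
have cne1 : nat_of_ord (s (Ordinal hq1)) != j.*2.+1.
  apply/eqP => e; have : s (Ordinal hq1) = s q by apply: ord_inj; rewrite sq.
  move/perm_inj/(congr1 (@nat_of_ord m)) => /=; lia.
have oc : odd (s (Ordinal hq1)).
  have := Hd (Ordinal hq1); case: ifP => // _ h.
  have h' : (Ordinal hq1).+1 < m by rewrite /=; have := ltn_ord q; lia.
  have := h h'.
  have -> : Ordinal h' = q by apply: ord_inj => /=; lia.
  rewrite sq; lia.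
have cne2 : nat_of_ord (s (Ordinal hq1)) != j.*2.+2.
  by apply/eqP => e; move: oc; rewrite e /= odd_double.
have hd : (s (Ordinal hq1)).-1 < m by have := ltn_ord (s (Ordinal hq1)); lia.
pose r := (s^-1)%g (Ordinal hd).
have sr : nat_of_ord (s r) = (s (Ordinal hq1)).-1 by rewrite /r permKV.
have rge : j.*2 <= r by apply: posge; rewrite sr; lia.
case: (ltnP r q.-1) => h1.
  by case: H231; apply: (@mk231 _ s r (Ordinal hq1) p) => /=; lia.
case: (ltnP p r) => h2.
  by case: H4213; apply: (@mk4213 _ s (Ordinal hq1) q p r) => /=; lia.
have [e|[e|e]] : nat_of_ord r = q.-1 \/ nat_of_ord r = q \/ nat_of_ord r = p by lia.
- have e' : r = Ordinal hq1 by apply: ord_inj.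
  by move: sr; rewrite e'; lia.
- have e' : r = q by apply: ord_inj.
  by move: sr; rewrite e' sq; lia.
- have e' : r = p by apply: ord_inj.
  by move: sr; rewrite e' sp; lia.
Qed.

Theorem theorem3p8 (n : nat) (hn : 1 <= n) (s : 'S_(n.*2)) :
  (dumont1 s /\ avoids_pat s pat231 /\ avoids_pat s pat4213) <->
  (forall i : 'I_(n.*2), val (s i) = (if odd i then i.-1 else i.+1)).
Proof.
split.
  move=> [Hd [H1 H2]].
  have all : forall j, j <= n -> forall i : 'I_(n.*2), i < j.*2 -> nat_of_ord (s i) = partner i.
    elim=> [|j IHj] hj i hi; first by [].
    apply: (@step _ s Hd H1 H2 j _ _ i); [lia| |by rewrite doubleS in hi].
    by move=> k hk; apply: IHj => //; lia.
  by move=> i; have := all n (leqnn n) i (ltn_ord i); rewrite /partner.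
move=> H.
have Hp : forall i, nat_of_ord (s i) = partner i by move=> i; rewrite H.
split.
  have oddP : forall k, odd k -> odd k.-1 = false by case=> //= k; case: (odd k).
  move=> i; rewrite Hp /partner; case oi: (odd i).
    rewrite oddP //= => h; rewrite Hp /partner /= ?oddS oi /=; lia.
  rewrite ?oddS oi /=.
  have h' : i.+1 < n.*2.
    have := odd_double_half i; rewrite oi /= => h2; have := ltn_ord i; lia.
  by exists h'; rewrite Hp /partner /= ?oddS oi /=.
split.
  move=> [f [Hm Hi]].
  have h01 := Hm (Ordinal (isT : 0 < 3)) (Ordinal (isT : 1 < 3)) isT.
  have h12 := Hm (Ordinal (isT : 1 < 3)) (Ordinal (isT : 2 < 3)) isT.
  have h02 := Hm (Ordinal (isT : 0 < 3)) (Ordinal (isT : 2 < 3)) isT.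
  have e := Hi (Ordinal (isT : 2 < 3)) (Ordinal (isT : 0 < 3)); simpl in e.
  have := @inv_gap _ s _ _ Hp h02 ltac:(by rewrite e); lia.
move=> [f [Hm Hi]].
have h01 := Hm (Ordinal (isT : 0 < 4)) (Ordinal (isT : 1 < 4)) isT.
have h12 := Hm (Ordinal (isT : 1 < 4)) (Ordinal (isT : 2 < 4)) isT.
have h02 := Hm (Ordinal (isT : 0 < 4)) (Ordinal (isT : 2 < 4)) isT.
have e := Hi (Ordinal (isT : 2 < 4)) (Ordinal (isT : 0 < 4)); simpl in e.
have := @inv_gap _ s _ _ Hp h02 ltac:(by rewrite e); lia.
Qed.
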